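(* Let $\Sigma$ be a finite non-empty alphabet, $V=\mathbb{R}^d$ with a fixed norm $|\cdot|_V$, $W=\mathbb{R}^N$ with a fixed norm $|\cdot|_W$, $\lambda>0$, and $\mathbf{h},\mathbf{g}\colon\Sigma^*\to V$. Then: (1) There exists a constant $c(\lambda)>0$ such that for every $\psi\in\mathrm{Aff}(V,W)$, $$d_{\infty,\Delta}(\mathrm{softmax}_\lambda\circ\psi\circ\mathbf{h},\ \mathcal{V}_N(\mathbf{g}))\le c(\lambda)\,\|\psi_{\mathrm{lin}}\|\ \inf_{\phi\in\mathrm{Aff}(V)}\|\mathbf{h}-\phi\circ\mathbf{g}\|_\infty.$$ (2) $d_{\mathcal{V}(V,\Delta)}(\mathbf{h},\mathbf{g})\le c(\lambda)\, d_{\mathrm{Aff}(V,W)}(\mathbf{h},\mathbf{g})$. (3) If $\inf_{\phi\in\mathrm{Aff}(V)}\|\mathbf{h}-\phi\circ\mathbf{g}\|_\infty=0$ then $d_{\mathrm{Aff}(V,W)}(\mathbf{h},\mathbf{g})=0$, and if $d_{\mathrm{Aff}(V,W)}(\mathbf{h},\mathbf{g})=0$ then $d_{\mathcal{V}(V,\Delta)}(\mathbf{h},\mathbf{g})=0$.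
   Context: $\mathrm{Aff}(V)$ is the group of invertible affine maps of $V$; $\mathrm{Aff}(V,W)$ is the set of affine maps $\psi(\mathbf{v})=\psi_{\mathrm{lin}}\mathbf{v}+\mathbf{b}$ with $\psi_{\mathrm{lin}}\colon V\to W$ linear and $\mathbf{b}\in W$; $\|\psi_{\mathrm{lin}}\|$ is its operator norm with respect to $|\cdot|_V,|\cdot|_W$. For maps into $V$, $\|\mathbf{f}\|_\infty=\sup_{\mathbf{y}\in\Sigma^*}|\mathbf{f}(\mathbf{y})|_V$; $d_{\infty,W}(\mathbf{f},\mathbf{f}')=\sup_{\mathbf{y}}|\mathbf{f}(\mathbf{y})-\mathbf{f}'(\mathbf{y})|_W$ for maps into $W$; $d_{\infty,\Delta}(p,q)=\sup_{\mathbf{y}}|p(\mathbf{y})-q(\mathbf{y})|_W$ for maps $p,q\colon\Sigma^*\to\Delta^{N-1}$ (the probability simplex in $\mathbb{R}^N$); all these take values in $[0,\infty]$. For a distance $d$, $d(x,E)=\inf_{y\in E}d(x,y)$ and $d^{\mathcal{H}}(E,E')=\sup_{x\in E}d(x,E')$. $\mathrm{softmax}_\lambda(\mathbf{x})_i=e^{\lambda x_i}/\sum_je^{\lambda x_j}$. Set $\mathrm{Aff}_{V,W}(\mathbf{h})=\{\psi\circ\mathbf{h}:\psi\in\mathrm{Aff}(V,W)\}$, $\mathcal{V}_N(\mathbf{h})=\{\mathrm{softmax}_\lambda\circ\psi\circ\mathbf{h}:\psi\in\mathrm{Aff}(V,W)\}$, $d_{\mathrm{Aff}(V,W)}(\mathbf{h},\mathbf{g})=d^{\mathcal{H}}_{\infty,W}(\mathrm{Aff}_{V,W}(\mathbf{h}),\mathrm{Aff}_{V,W}(\mathbf{g}))$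 and $d_{\mathcal{V}(V,\Delta)}(\mathbf{h},\mathbf{g})=d^{\mathcal{H}}_{\infty,\Delta}(\mathcal{V}_N(\mathbf{h}),\mathcal{V}_N(\mathbf{g}))$. *)

(* Defs.v *)
From HB Require Import structures.
From mathcomp Require Import all_boot all_order all_algebra.
From mathcomp Require Import all_classical all_reals all_analysis.
Set Implicit Arguments. Unset Strict Implicit. Unset Printing Implicit Defensive.
Import Order.TTheory GRing.Theory Num.Theory.
Local Open Scope classical_set_scope.
Local Open Scope ring_scope.

Section Defs.
Variable R : realType.

Definition is_norm (k : nat) (n : 'rV[R]_k -> R) : Prop :=
  [/\ (forall x, 0 <= n x),
      (forall x, n x = 0 -> x = 0),
      (forall (a : R) x, n (a *: x) = `|a| * n x) &
      (forall x y, n (x + y) <= n x + n y)].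

Definition aff (d N : nat) (A : 'M[R]_(d, N)) (b : 'rV[R]_N) (v : 'rV[R]_d)
  : 'rV[R]_N := v *m A + b.

Definition opnorm (d N : nat) (nV : 'rV[R]_d -> R) (nW : 'rV[R]_N -> R)
  (A : 'M[R]_(d, N)) : \bar R :=
  ereal_sup [set (nW (v *m A))%:E | v in [set v | nV v <= 1]].

Definition softmax (N : nat) (lam : R) (x : 'rV[R]_N) : 'rV[R]_N :=
  \row_i (expR (lam * x 0 i) / \sum_(j < N) expR (lam * x 0 j)).

Variable S : finType.

Definition dinf (k : nat) (n : 'rV[R]_k -> R) (f f' : seq S -> 'rV[R]_k)
  : \bar R := ereal_sup (range (fun y => (n (f y - f' y))%:E)).

Definition supnorm (k : nat) (n : 'rV[R]_k -> R) (f : seq S -> 'rV[R]_k)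
  : \bar R := ereal_sup (range (fun y => (n (f y))%:E)).

(* d(x, E) and the (one-sided) Hausdorff distance d^H(E, E') *)
Definition dist_set (T : Type) (dd : T -> T -> \bar R) (x : T) (E : set T)
  : \bar R := ereal_inf [set dd x y | y in E].
Definition dhaus (T : Type) (dd : T -> T -> \bar R) (E E' : set T) : \bar R :=
  ereal_sup [set dist_set dd x E' | x in E].

Definition inf_aff (d : nat) (nV : 'rV[R]_d -> R) (h g : seq S -> 'rV[R]_d)
  : \bar R :=
  ereal_inf [set supnorm nV (fun y => h y - aff Ab.1 Ab.2 (g y))
            | Ab in [set Ab : 'M[R]_d * 'rV[R]_d | Ab.1 \in unitmx]].

Definition AffVW (d N : nat) (h : seq S -> 'rV[R]_d) : set (seq S -> 'rV[R]_N) :=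
  [set (fun y => aff Ab.1 Ab.2 (h y)) | Ab in [set: 'M[R]_(d, N) * 'rV[R]_N]].
Definition VN (d N : nat) (lam : R) (h : seq S -> 'rV[R]_d)
  : set (seq S -> 'rV[R]_N) :=
  [set (fun y => softmax lam (aff Ab.1 Ab.2 (h y)))
  | Ab in [set: 'M[R]_(d, N) * 'rV[R]_N]].

Definition dAff (d N : nat) (nW : 'rV[R]_N -> R) (h g : seq S -> 'rV[R]_d)
  : \bar R := dhaus (dinf nW) (@AffVW d N h) (@AffVW d N g).
Definition dVDelta (d N : nat) (nW : 'rV[R]_N -> R) (lam : R)
  (h g : seq S -> 'rV[R]_d) : \bar R :=
  dhaus (dinf nW) (@VN d N lam h) (@VN d N lam g).

End Defs.
Arguments AffVW {R S d} N h.
Arguments VN {R S d} N lam h.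
Arguments dAff {R S d N} nW h g.
Arguments dVDelta {R S d N} nW lam h g.

(* Main.v *)
Require Import Defs.
From HB Require Import structures.
From mathcomp Require Import all_boot all_order all_algebra.
From mathcomp Require Import all_classical all_reals all_analysis.
From mathcomp Require Import lra ring.
Import Order.TTheory GRing.Theory Num.Theory.
Import numFieldTopology.Exports numFieldNormedType.Exports.
Local Open Scope classical_set_scope.
Local Open Scope ring_scope.

Section SM.
Variable R : realType.

Lemma coord_le_norm k (x : 'rV[R]_k) i : `|x 0 i| <= `|x|.
Proof.
rewrite [leRHS]/Num.norm /= mx_normrE.
exact: (le_bigmax _ (fun ij : 'I_1 * 'I_k => `|x ij.1 ij.2|) (0, i)).
Qed.

Lemma norm_le_coord k (x : 'rV[R]_k) (c : R) : 0 <= c -> (forall i, `|x 0 i| <= c) -> `|x| <= c.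
Proof.
move=> c0 H; rewrite [leLHS]/Num.norm /= mx_normrE.
apply: bigmax_le => // -[a b] _ /=; by rewrite (ord1 a).
Qed.

Lemma exp_lin {u : R} : 0 <= u -> expR u - 1 <= 2 * u \/ 1 <= 2 * u.
Proof.
move=> u0; have [uh|uh] := leP (1/2) u; [right | left].
  lra.
have h2 : expR u * (1 - u) <= 1.
  have := expR_ge1Dx (- u); rewrite expRN => H.
  have E0 := expR_gt0 u; have EV : expR u * (expR u)^-1 = 1 by rewrite mulfV // gt_eqF.
  move: H E0 EV; set E := expR u; set F := E^-1 => H E0 EV; nra.
have := expR_gt0 u; move: h2; set E := expR u => h2 h0.
nra.
Qed.

Lemma fin_ineq {p q B u : R} : 0 <= p -> p <= 1 -> 0 <= q -> q <= 1 -> 1 <= B ->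
  p <= B * q -> q <= B * p -> (B - 1 <= 2 * u \/ 1 <= 2 * u) -> `|p - q| <= 2 * u.
Proof.
move=> p0 p1 q0 q1 B1 pq qp H; rewrite ler_norml.
case: H => H; apply/andP; split; nra.
Qed.

Lemma sm_coord (lam : R) (N : nat) (x y : 'rV[R]_N) i (t : R) : 0 < lam ->
  (forall j, `|x 0 j - y 0 j| <= t) ->
  `|softmax lam x 0 i - softmax lam y 0 i| <= 4 * lam * t.
Proof.
move=> l0 Ht; rewrite !mxE.
have t0 : 0 <= t by apply: le_trans (Ht i).
set a := expR (lam * t).
have a1 : 1 <= a by rewrite -expR0 ler_expR mulr_ge0 // ltW.
have hE : forall (x y : 'rV[R]_N), (forall j, `|x 0 j - y 0 j| <= t) ->
    forall j, expR (lam * x 0 j) <= a * expR (lam * y 0 j).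
  move=> x' y' H j; rewrite /a -expRD ler_expR -mulrDr ler_pM2l //.
  by rewrite -lerBlDr; apply: le_trans (H j); exact: ler_norm.
have Ht' : forall j, `|y 0 j - x 0 j| <= t by move=> j; rewrite distrC.
have hS : forall (x y : 'rV[R]_N), (forall j, `|x 0 j - y 0 j| <= t) ->
    \sum_j expR (lam * x 0 j) <= a * \sum_j expR (lam * y 0 j).
  move=> x' y' H; rewrite mulr_sumr; apply: ler_sum => j _; exact: hE.
have hP : forall (x : 'rV[R]_N), expR (lam * x 0 i) <= \sum_j expR (lam * x 0 j).
  move=> x'; rewrite (bigD1 i) //= lerDl; apply: sumr_ge0 => j _; exact: ltW (expR_gt0 _).
have := hE _ _ Ht i; have := hE _ _ Ht' i; have := hS _ _ Ht; have := hS _ _ Ht'.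
have := hP x; have := hP y; have := expR_gt0 (lam * x 0 i); have := expR_gt0 (lam * y 0 i).
set Ex := expR (lam * x 0 i); set Ey := expR (lam * y 0 i).
set Sx := \sum_j expR (lam * x 0 j); set Sy := \sum_j expR (lam * y 0 j).
move=> Ey0 Ex0 PY PX S1 S2 E1 E2.
have Sx0 : 0 < Sx by apply: lt_le_trans Ex0 PX.
have Sy0 : 0 < Sy by apply: lt_le_trans Ey0 PY.
have hp : Ex / Sx * (Sx * Sy) = Ex * Sy by rewrite mulrA divfK // gt_eqF.
have hq : Ey / Sy * (Sx * Sy) = Ey * Sx by rewrite [Sx * Sy]mulrC mulrA divfK // gt_eqF.
have p0 : 0 <= Ex / Sx by rewrite divr_ge0 // ltW.
have q0 : 0 <= Ey / Sy by rewrite divr_ge0 // ltW.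
have p1 : Ex / Sx <= 1 by rewrite ler_pdivrMr // mul1r.
have q1 : Ey / Sy <= 1 by rewrite ler_pdivrMr // mul1r.
have P0 : 0 < Sx * Sy by rewrite mulr_gt0.
have pq : Ex / Sx <= a ^+ 2 * (Ey / Sy).
  rewrite -(ler_pM2r P0) hp -mulrA hq expr2.
  have : Ex * Sy <= (a * Ey) * (a * Sx) by apply: ler_pM => //; exact: ltW.
  by move=> H; apply: (le_trans H); rewrite -!mulrA; apply: ler_wpM2l => //; [lra|rewrite mulrCA].
have qp : Ey / Sy <= a ^+ 2 * (Ex / Sx).
  rewrite -(ler_pM2r P0) hq -mulrA hp expr2.
  have : Ey * Sx <= (a * Ex) * (a * Sy) by apply: ler_pM => //; exact: ltW.
  by move=> H; apply: (le_trans H); rewrite -!mulrA; apply: ler_wpM2l => //; [lra|rewrite mulrCA].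
have aB : a ^+ 2 = expR (2 * lam * t) by rewrite /a -expRM_natl mulrA.
have u0 : 0 <= 2 * lam * t by rewrite mulr_ge0 // mulr_ge0 // ltW.
have Hl := exp_lin u0.
move: pq qp p0 q0 p1 q1 Hl; rewrite aB.
set p := Ex / Sx; set q := Ey / Sy; set B := expR _ => pq qp p0 q0 p1 q1 Hl.
have B1 : 1 <= B.
  by rewrite /B -[X in X <= _]expR0 ler_expR.
have -> : 4 * lam * t = 2 * (2 * lam * t) by ring.
exact: (fin_ineq p0 p1 q0 q1 B1 pq qp Hl).
Qed.

End SM.

Section NE.
Variable R : realType.

Variable k : nat.
Variable n : 'rV[R]_k -> R.
Hypothesis Hn : is_norm n.

Lemma n0 : n 0 = 0.
Proof. case: Hn => _ _ Hs _; by rewrite -(scale0r 0) Hs normr0 mul0r. Qed.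

Lemma nN x : n (- x) = n x.
Proof. case: Hn => _ _ Hs _; by rewrite -scaleN1r Hs normrN normr1 mul1r. Qed.

Lemma nB x y : n x - n y <= n (x - y).
Proof. case: Hn => _ _ _ Ht; rewrite lerBlDr; by rewrite -{1}(subrK y x) Ht. Qed.

Lemma norm_upper : exists M, 0 < M /\ forall x, n x <= M * `|x|.
Proof.
case: Hn => Hp _ Hs Ht.
exists (1 + \sum_(j < k) n (delta_mx 0 j)); split.
  by rewrite ltr_wpDr // sumr_ge0.
move=> x; rewrite {1}(row_sum_delta x).
have Hsum : forall (F : 'I_k -> 'rV[R]_k), n (\sum_j F j) <= \sum_j n (F j).
  move=> F; elim/big_ind2: _ => //; first by rewrite n0.
  by move=> a b c d H1 H2; apply: le_trans (Ht _ _) (lerD H1 H2).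
apply: le_trans (Hsum _) _.
rewrite mulrDl mul1r mulr_suml; apply: ler_wpDl => //.
apply: ler_sum => j _; rewrite Hs mulrC; apply: ler_wpM2l => //.
exact: coord_le_norm.
Qed.

Lemma n_cont : continuous n.
Proof.
have [M [M0 HM]] := norm_upper.
move=> x; apply/(@cvgrPdist_lt _ _ _ _ (nbhs_filter x)) => e e0.
apply/nbhs_ballP; exists (e / M); first by rewrite /= divr_gt0.
move=> y; rewrite -ball_normE /= => Hy.
rewrite (@le_lt_trans _ _ (M * `|x - y|)) //; last by rewrite -ltr_pdivlMl // mulrC.
rewrite ler_norml; apply/andP; split.
  rewrite lerNl opprB; apply: le_trans (nB _ _) _; rewrite -opprB nN; exact: HM.
apply: le_trans (nB _ _) _; exact: HM.
Qed.


Lemma norm_lower : exists m, 0 < m /\ forall x, m * `|x| <= n x.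
Proof.
case: (Hn) => Hp H0 Hs Ht.
pose A := [set x : 'rV[R]_k | `|x| = 1].
have scl : forall x : 'rV[R]_k, x != 0 -> A (`|x|^-1 *: x).
  move=> x x0; rewrite /A /= normrZ normrV ?unitfE ?normr_eq0 //.
  by rewrite normr_id mulVf // normr_eq0.
case: (pselect (A !=set0)) => [A0|AN]; last first.
  exists 1; split => // x; have [->|x0] := eqVneq x 0.
    by rewrite normr0 mulr0 Hp.
  by exfalso; apply: AN; exists (`|x|^-1 *: x); exact: scl.
have cA : compact A.
  apply: bounded_closed_compact.
    rewrite /bounded_near; apply: filterS (nbhs_pinfty_ge (r:=1) _) => //.
    by move=> M M1 x; rewrite /A /= => ->.
  apply: (@preimage_closed _ _ (fun x : 'rV[R]_k => `|x|) [set 1]).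
    by move=> x _; exact: norm_continuous.
  exact: closed_eq.
have [c cA' Hc] := EVT_min_rV A0 cA (continuous_subspaceT n_cont).
have c0 : c != 0.
  apply/negP => /eqP c0; move: cA'; rewrite inE /A /= c0 normr0 => /esym/eqP.
  by rewrite oner_eq0.
exists (n c); split.
  rewrite lt_def Hp andbT; apply/negP => /eqP/H0/eqP; exact/negP.
move=> x; have [->|x0] := eqVneq x 0; first by rewrite normr0 mulr0 Hp.
have := Hc _ (mem_set (scl x x0)); rewrite Hs normrV ?unitfE ?normr_eq0 // normr_id.
by rewrite ler_pdivlMl ?normr_gt0 // mulrC.
Qed.

End NE.


Section Main.
Variable R : realType.

Lemma sm_lip_norm (N : nat) (nW : 'rV[R]_N -> R) (lam : R) :
  is_norm nW -> 0 < lam ->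
  exists c, 0 < c /\ forall x y, nW (softmax lam x - softmax lam y) <= c * nW (x - y).
Proof.
move=> Hn l0.
have [M [M0 HM]] := @norm_upper _ _ _ Hn.
have [m [m0 Hm]] := @norm_lower _ _ _ Hn.
exists (M * (4 * lam) / m); split; first by rewrite !mulr_gt0 // invr_gt0.
move=> x y; apply: (le_trans (HM _)).
have H1 : `|softmax lam x - softmax lam y| <= 4 * lam * `|x - y|.
  apply: norm_le_coord; first by rewrite !mulr_ge0 // ltW.
  move=> i.
  have Ht : forall j, `|x 0 j - y 0 j| <= `|x - y|.
    by move=> j; have := @coord_le_norm R N (x - y) j; rewrite !mxE.
  have := @sm_coord R lam N x y i `|x - y| l0 Ht.
  by rewrite [in X in X -> _]/softmax [in X in _ -> X]/softmax !mxE.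
have H2 : `|x - y| <= nW (x - y) / m by rewrite ler_pdivlMr // mulrC.
rewrite -!mulrA; apply: ler_wpM2l; first exact: ltW.
apply: (le_trans H1); rewrite mulrA; apply: ler_wpM2l.
  by rewrite mulr_ge0 // ltW.
by rewrite mulrC.
Qed.

Local Open Scope ereal_scope.

Lemma inf_mul (K : R) (x : \bar R) (E : set (\bar R)) : (0 <= K)%R -> E !=set0 ->
  (forall e, E e -> x <= K%:E * e) -> x <= K%:E * ereal_inf E.
Proof.
move=> K0 [e0 Ee0] H.
have [K0'|Kn0] := eqVneq K 0%R.
  have EK : K%:E = 0 by rewrite K0'.
  by rewrite EK mul0e; have := H _ Ee0; rewrite EK mul0e.
have Kp : (0 < K)%R by rewrite lt_def Kn0 K0.
have -> : x = K%:E * ((K^-1)%:E * x).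
  by rewrite muleA -EFinM mulfV // mul1e.
apply: lee_wpmul2l; first by rewrite lee_fin.
apply: le_ereal_inf_tmp => e Ee.
have := H _ Ee => Hx.
have -> : e = (K^-1)%:E * (K%:E * e) by rewrite muleA -EFinM mulVf // mul1e.
by apply: lee_wpmul2l => //; rewrite lee_fin invr_ge0.
Qed.

Variable S : finType.

Lemma dinf_ge0 k (n : 'rV[R]_k -> R) (f f' : seq S -> 'rV[R]_k) :
  is_norm n -> 0 <= dinf n f f'.
Proof.
case=> Hp _ _ _; apply: le_ereal_sup_tmp.
by exists (n (f [::] - f' [::]))%:E; [exists [::] | rewrite lee_fin].
Qed.

Lemma dist_ge0 k (n : 'rV[R]_k -> R) (f : seq S -> 'rV[R]_k) E :
  is_norm n -> 0 <= dist_set (dinf n) f E.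
Proof.
move=> Hn; apply: le_ereal_inf_tmp => _ [y _ <-]; exact: dinf_ge0.
Qed.

Lemma Lip (N : nat) (nW : 'rV[R]_N -> R) (lam c : R) :
  (0 < c)%R -> (forall x y, (nW (softmax lam x - softmax lam y) <= c * nW (x - y))%R) ->
  forall F G : seq S -> 'rV[R]_N,
  dinf nW (fun y => softmax lam (F y)) (fun y => softmax lam (G y))
  <= c%:E * dinf nW F G.
Proof.
move=> c0 Hc F G; apply: ge_ereal_sup => _ [y _ <-].
apply: (@le_trans _ _ ((c * nW (F y - G y))%:E)); first by rewrite lee_fin.
rewrite EFinM; apply: lee_wpmul2l; first by rewrite lee_fin ltW.
by apply: ereal_sup_ubound; exists y.
Qed.

Lemma opn d N (nV : 'rV[R]_d -> R) (nW : 'rV[R]_N -> R) (A : 'M[R]_(d, N)) :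
  is_norm nV -> is_norm nW ->
  exists r : R, [/\ (0 <= r)%R, opnorm nV nW A = r%:E &
    forall x, (nW (x *m A) <= r * nV x)%R].
Proof.
move=> HV HW.
have [m [m0 Hm]] := @norm_lower _ _ _ HV.
case: (HW) => Wp W0 Ws Wt.
case: (HV) => Vp V0 Vs Vt.
set K := ((\sum_i nW (row i A)) / m)%R.
have HK : forall x, (nW (x *m A) <= K * nV x)%R.
  move=> x; rewrite mulmx_sum_row.
  have Hsum : forall (F : 'I_d -> 'rV[R]_N), (nW (\sum_j F j) <= \sum_j nW (F j))%R.
    move=> F; elim/big_ind2: _ => //; first by rewrite (@n0 _ _ _ HW).
    by move=> a b c e H1 H2; apply: le_trans (Wt _ _) (lerD H1 H2).
  apply: (le_trans (Hsum _)).
  apply: (@le_trans _ _ (\sum_i `|x| * nW (row i A))%R).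
    apply: ler_sum => i _; rewrite Ws; apply: ler_wpM2r => //; exact: coord_le_norm.
  rewrite -mulr_sumr /K mulrC -mulrA; apply: ler_wpM2l; first exact: sumr_ge0.
  by rewrite ler_pdivlMl // mulrC.
have K0 : (0 <= K)%R by rewrite divr_ge0 ?sumr_ge0 // ltW.
have hub : opnorm nV nW A <= K%:E.
  apply: ge_ereal_sup => _ [v /= Hv <-]; rewrite lee_fin.
  apply: (le_trans (HK v)); rewrite -[leRHS]mulr1; exact: ler_wpM2l.
have hlb : 0 <= opnorm nV nW A.
  apply: le_ereal_sup_tmp; exists (nW (0 *m A))%:E; last by rewrite lee_fin.
  by exists 0%R => //=; rewrite (@n0 _ _ _ HV).
move: hub hlb; case E: (opnorm nV nW A) => [r| |] //= hub hlb.
exists r; split => //.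
move=> x; have [x0|xn0] := eqVneq (nV x) 0%R.
  by rewrite x0 mulr0 (V0 _ x0) mul0mx (@n0 _ _ _ HW).
have nx : (0 < nV x)%R by rewrite lt_def xn0 Vp.
have H1 : (nW (((nV x)^-1 *: x) *m A))%:E <= opnorm nV nW A.
  apply: ereal_sup_ubound; exists ((nV x)^-1 *: x) => //=.
  by rewrite Vs ger0_norm ?invr_ge0 ?Vp // mulVf.
move: H1; rewrite E lee_fin -scalemxAl Ws ger0_norm ?invr_ge0 ?Vp //.
by rewrite ler_pdivrMl // mulrC.
Qed.

Lemma aff_sub d N (A : 'M[R]_(d, N)) b u w : (aff A b u - aff A b w = (u - w) *m A)%R.
Proof. by rewrite /aff mulmxBl opprD addrACA subrr addr0. Qed.

Lemma aff_comp d N (A : 'M[R]_(d, N)) b (P : 'M[R]_d) q v :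
  aff A b (aff P q v) = aff (P *m A) (q *m A + b) v.
Proof. by rewrite /aff mulmxDl mulmxA addrA. Qed.

Lemma key d N (nV : 'rV[R]_d -> R) (nW : 'rV[R]_N -> R) (A : 'M[R]_(d, N)) b r
  (h g : seq S -> 'rV[R]_d) P q :
  (0 <= r)%R -> (forall x, (nW (x *m A) <= r * nV x)%R) ->
  dinf nW (fun y => aff A b (h y)) (fun y => aff (P *m A) (q *m A + b)%R (g y))
  <= r%:E * supnorm nV (fun y => h y - aff P q (g y))%R.
Proof.
move=> r0 Hr; apply: ge_ereal_sup => _ [y _ <-].
rewrite -aff_comp aff_sub.
apply: (@le_trans _ _ ((r * nV (h y - aff P q (g y)))%R%:E)); first by rewrite lee_fin.
rewrite EFinM; apply: lee_wpmul2l; first by rewrite lee_fin.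
by apply: ereal_sup_ubound; exists y.
Qed.

End Main.
Arguments sm_lip_norm {R N nW lam}.
Arguments opn {R d N nV nW} A.
Arguments Lip {R S N nW lam c}.
Arguments key {R S d N nV nW A b r h g P q}.
Arguments inf_mul {R K x E}.
Arguments dist_ge0 {R S k n f E}.

Theorem mainTheorem4 (R : realType) (S : finType) (HS : (0 < #|S|)%N)
  (d N : nat) (nV : 'rV[R]_d -> R) (nW : 'rV[R]_N -> R)
  (HnV : is_norm nV) (HnW : is_norm nW) (lam : R) (Hlam : 0 < lam) :
  exists c : R, 0 < c /\
  forall h g : seq S -> 'rV[R]_d,
    [/\ (forall (A : 'M[R]_(d, N)) (b : 'rV[R]_N),
          (dist_set (dinf nW) (fun y => softmax lam (aff A b (h y)))
             (VN N lam g)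
           <= c%:E * opnorm nV nW A * inf_aff nV h g)%E),
        (dVDelta nW lam h g <= c%:E * dAff nW h g)%E,
        (inf_aff nV h g = 0%E -> dAff nW h g = 0%E) &
        (dAff nW h g = 0%E -> dVDelta nW lam h g = 0%E)].
Proof.
have [c [c0 Hc]] := sm_lip_norm HnW Hlam.
exists c; split => // h g.
have inv_ne : [set supnorm nV (fun y => h y - aff Ab.1 Ab.2 (g y))
            | Ab in [set Ab : 'M[R]_d * 'rV[R]_d | Ab.1 \in unitmx]] !=set0.
  by exists (supnorm nV (fun y => h y - aff (1%:M : 'M[R]_d) 0 (g y))); exists (1%:M, 0) => //=; exact: unitmx1.
have P2 : (dVDelta nW lam h g <= c%:E * dAff nW h g)%E.
  apply: ge_ereal_sup => _ [f [[A b] _ <-] <-].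
  apply: (@le_trans _ _ (c%:E * dist_set (dinf nW) (fun y => aff A b (h y)) (AffVW N g))%E).
    apply: inf_mul; first exact: ltW.
      by exists (dinf nW (fun y => aff A b (h y)) (fun y => aff 0 0 (g y))); exists (fun y => aff 0 0 (g y)) => //; exists (0, 0).
    move=> _ [_ [[A' b'] _ <-] <-].
    apply: (@le_trans _ _ (dinf nW (fun y => softmax lam (aff A b (h y))) (fun y => softmax lam (aff A' b' (g y))))).
      by apply: ge_ereal_inf; exists (dinf nW (fun y => softmax lam (aff A b (h y))) (fun y => softmax lam (aff A' b' (g y)))) => //; exists (fun y => softmax lam (aff A' b' (g y))) => //; exists (A', b').
    exact: Lip.
  apply: lee_wpmul2l; first by rewrite lee_fin ltW.
  by apply: ereal_sup_ubound; exists (fun y => aff A b (h y)) => //; exists (A, b).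
split => //.
- move=> A b.
  have [r [r0 -> Hr]] := opn A HnV HnW.
  rewrite -EFinM; apply: inf_mul; first by rewrite mulr_ge0 // ltW.
    exact: inv_ne.
  move=> _ [[P q] /= Pinv <-].
  apply: (@le_trans _ _ (dinf nW (fun y => softmax lam (aff A b (h y))) (fun y => softmax lam (aff (P *m A) (q *m A + b) (g y))))).
    apply: ge_ereal_inf; eexists; last exact: lexx.
    by exists (fun y => softmax lam (aff (P *m A) (q *m A + b) (g y))) => //; exists (P *m A, q *m A + b).
  apply: (le_trans (Lip c0 Hc _ _)).
  rewrite EFinM -muleA; apply: lee_wpmul2l; first by rewrite lee_fin ltW.
  exact: key.
- move=> H0; apply/eqP; rewrite eq_le; apply/andP; split.
    apply: ge_ereal_sup => _ [f [[A b] _ <-] <-].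
    have [r [r0 _ Hr]] := opn A HnV HnW.
    have := @inf_mul R r _ _ r0 inv_ne.
    rewrite /inf_aff in H0; rewrite H0 mule0; apply.
    move=> _ [[P q] /= Pinv <-].
    apply: (@le_trans _ _ (dinf nW (fun y => aff A b (h y)) (fun y => aff (P *m A) (q *m A + b) (g y)))).
      apply: ge_ereal_inf; eexists; last exact: lexx.
      by exists (fun y => aff (P *m A) (q *m A + b) (g y)) => //; exists (P *m A, q *m A + b).
    exact: key.
  apply: le_ereal_sup_tmp; exists (dist_set (dinf nW) (fun y => aff 0 0 (h y)) (AffVW N g)).
    by exists (fun y => aff 0 0 (h y)) => //; exists (0, 0).
  exact: dist_ge0.
- move=> H0; apply/eqP; rewrite eq_le; apply/andP; split.
    by move: P2; rewrite H0 mule0.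
  apply: le_ereal_sup_tmp; exists (dist_set (dinf nW) (fun y => softmax lam (aff 0 0 (h y))) (VN N lam g)).
    by exists (fun y => softmax lam (aff 0 0 (h y))) => //; exists (0, 0).
  exact: dist_ge0.
Qed.
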